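(* Let $G$ be a transient network and let $A$ be a set of vertices for which there exist $\varepsilon>0$ and infinitely many pairwise disjoint sets $A_1,A_2,\ldots\subseteq A$ with $\operatorname{Cap}(A_i)\ge\varepsilon$ for every $i\ge1$. Then $\operatorname{Cap}(A)=\infty$.
   Context: A network is a connected locally finite graph $G=(V,E)$ with conductances $c:E\to(0,\infty)$; its random walk moves along an incident edge chosen with probability proportional to conductance, and $G$ is transient if this walk is transient. With $c(v)=\sum_{e^-=v}c(e)$ and $\tau_A^+$ the first return time to $A$, the capacity of a finite set $A$ is $\operatorname{Cap}(A)=\sum_{v\in A}c(v)\mathbf P_v(\tau_A^+=\infty)$, and for infinite $A$ it is $\sup\{\operatorname{Cap}(A'):A'\subseteq A\text{ finite}\}$. *)

(* Defs.v *)
From HB Require Import structures.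
From mathcomp Require Import all_boot all_order all_algebra.
From mathcomp Require Import all_classical all_reals all_analysis.
Set Implicit Arguments. Unset Strict Implicit. Unset Printing Implicit Defensive.
Import Order.TTheory GRing.Theory Num.Theory.
Import numFieldNormedType.Exports.
Local Open Scope classical_set_scope.
Local Open Scope ring_scope.

Section Network.
Variables (R : realType) (V : choiceType).
Variables (c : V -> V -> R) (nbr : V -> seq V).

Definition is_network : Prop :=
  [/\ (forall x y, 0 <= c x y),
      (forall x y, c x y = c y x),
      (forall x, uniq (nbr x)),
      (forall x y, (0 < c x y) <-> (y \in nbr x)) &
      (forall x y, exists p : seq V,
          path (fun u w => 0 < c u w) x p /\ last x p = y)].

Definition cv (v : V) : R := \sum_(w <- nbr v) c v w.

Definition ptrans (v w : V) : R := c v w / cv v.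

(* avoid A n w = P_w(X_0, ..., X_n all lie outside A) *)
Fixpoint avoid (A : set V) (n : nat) (w : V) : R :=
  if `[< A w >] then 0 else
  match n with
  | 0 => 1
  | n'.+1 => \sum_(u <- nbr w) ptrans w u * avoid A n' u
  end.

(* P_v(tau_A^+ > n+1) = P_v(X_1, ..., X_{n+1} all outside A) *)
Definition no_return_by (A : set V) (v : V) (n : nat) : R :=
  \sum_(u <- nbr v) ptrans v u * avoid A n u.

(* P_v(tau_A^+ = oo), the limit of the nonincreasing sequence above *)
Definition escape (A : set V) (v : V) : R := limn (no_return_by A v).

(* the random walk is transient: every vertex is returned to with prob. < 1 *)
Definition transient : Prop := forall v, 0 < escape [set v] v.

Definition capf (A : set V) : R :=
  \sum_(v \in A) cv v * escape A v.

Definition Cap (A : set V) : \bar R :=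
  if `[< finite_set A >] then (capf A)%:E
  else ereal_sup [set (capf B)%:E | B in [set B | B `<=` A /\ finite_set B]].

End Network.

(* Main.v *)
Require Import Defs.
From HB Require Import structures.
From mathcomp Require Import all_boot all_order all_algebra.
From mathcomp Require Import all_classical all_reals all_analysis.
From mathcomp Require Import ring lra.
Import Order.TTheory GRing.Theory Num.Theory.
Import numFieldNormedType.Exports.
Set Implicit Arguments. Unset Strict Implicit. Unset Printing Implicit Defensive.
Local Open Scope classical_set_scope.
Local Open Scope ring_scope.

Section Pf.
Variables (R : realType) (V : choiceType) (c : V -> V -> R) (nbr : V -> seq V).
Hypothesis Hnet : is_network c nbr.
Hypothesis cvpos : forall x, 0 < cv c nbr x.

Lemma c_ge0 x y : 0 <= c x y. Proof. by case: Hnet. Qed.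
Lemma c_sym x y : c x y = c y x. Proof. by case: Hnet. Qed.
Lemma nbr_uniq x : uniq (nbr x). Proof. by case: Hnet. Qed.
Lemma c_nbr x y : (0 < c x y) <-> (y \in nbr x). Proof. by case: Hnet. Qed.
Lemma c_out x y : y \notin nbr x -> c x y = 0.
Proof.
move=> H; apply/eqP; rewrite eq_le c_ge0 andbT leNgt; apply/negP => /c_nbr.
by rewrite (negbTE H).
Qed.
Lemma nbr_sym x y : (y \in nbr x) = (x \in nbr y).
Proof. by apply/idP/idP => /c_nbr; rewrite c_sym => /c_nbr. Qed.

Lemma cv_neq0 x : cv c nbr x != 0. Proof. by rewrite gt_eqF. Qed.

Lemma c_ptrans x y : c x y = cv c nbr x * ptrans c nbr x y.
Proof. by rewrite /ptrans mulrC divfK ?cv_neq0. Qed.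

Lemma ptrans_ge0 x y : 0 <= ptrans c nbr x y.
Proof. by rewrite /ptrans divr_ge0 ?c_ge0 ?ltW. Qed.

Lemma ptrans_sum x : \sum_(u <- nbr x) ptrans c nbr x u = 1.
Proof. by rewrite /ptrans -mulr_suml divff ?cv_neq0. Qed.

Lemma sum_conv (s t : seq V) (h : V -> R) : uniq s -> uniq t ->
  (forall y, y \notin s -> h y = 0) -> (forall y, y \notin t -> h y = 0) ->
  \sum_(y <- s) h y = \sum_(y <- t) h y.
Proof.
move=> us ut hs ht.
rewrite (bigID (mem t)) /= [X in _ + X]big1 ?addr0; last by move=> y /ht.
rewrite [RHS](bigID (mem s)) /= [X in _ + X]big1 ?addr0; last by move=> y /hs.
rewrite -[LHS]big_filter -[RHS]big_filter; apply: perm_big; apply: uniq_perm; rewrite ?filter_uniq //.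
by move=> y; rewrite !mem_filter andbC.
Qed.

Notation av F := (avoid c nbr [set` (F : seq V)]).
Notation nr F := (no_return_by c nbr [set` (F : seq V)]).

Lemma avoid_in F n x : x \in F -> av F n x = 0.
Proof. by move=> xF; case: n => [|n] /=; rewrite asboolT. Qed.
Lemma avoid0 F x : x \notin F -> av F 0 x = 1.
Proof. by move=> xF /=; rewrite asboolF //; apply/negP. Qed.
Lemma avoidS F n x : x \notin F -> av F n.+1 x = nr F x n.
Proof. by move=> xF /=; rewrite asboolF //; apply/negP. Qed.

Lemma avoid_bnd F n x : 0 <= av F n x <= 1.
Proof.
elim: n x => [|n IH] x.
  by case: (boolP (x \in F)) => xF; [rewrite avoid_in // lexx ler01 | rewrite avoid0 // ler01 lexx].
case: (boolP (x \in F)) => xF; first by rewrite avoid_in // lexx ler01.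
rewrite avoidS // /no_return_by; apply/andP; split.
  by apply: sumr_ge0 => u _; rewrite mulr_ge0 ?ptrans_ge0 //; case/andP: (IH u).
rewrite -(ptrans_sum x); apply: ler_sum => u _.
by rewrite ler_piMr ?ptrans_ge0 //; case/andP: (IH u).
Qed.
Lemma avoid_ge0 F n x : 0 <= av F n x. Proof. by case/andP: (avoid_bnd F n x). Qed.
Lemma avoid_le1 F n x : av F n x <= 1. Proof. by case/andP: (avoid_bnd F n x). Qed.

Lemma avoid_dec F n x : av F n.+1 x <= av F n x.
Proof.
elim: n x => [|n IH] x.
  case: (boolP (x \in F)) => xF; first by rewrite !avoid_in.
  by rewrite avoid0 // avoid_le1.
case: (boolP (x \in F)) => xF; first by rewrite !avoid_in.
rewrite !avoidS // /no_return_by; apply: ler_sum => u _.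
by rewrite ler_wpM2l ?ptrans_ge0.
Qed.

Lemma nr_ge0 F x n : 0 <= nr F x n.
Proof. by apply: sumr_ge0 => u _; rewrite mulr_ge0 ?ptrans_ge0 ?avoid_ge0. Qed.

Lemma nr_dec F x n : nr F x n.+1 <= nr F x n.
Proof. by apply: ler_sum => u _; rewrite ler_wpM2l ?ptrans_ge0 ?avoid_dec. Qed.

Lemma nr_cvg F x : nr F x @ \oo --> escape c nbr [set` F] x.
Proof.
apply: nonincreasing_is_cvgn.
  by apply/nonincreasing_seqP => n; apply: nr_dec.
by exists 0 => _ [n _ <-]; apply: nr_ge0.
Qed.

Lemma escape_le F x n : escape c nbr [set` F] x <= nr F x n.
Proof.
apply: nonincreasing_cvgn_ge; first by apply/nonincreasing_seqP => m; apply: nr_dec.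
exact: cvgP (@nr_cvg F x).
Qed.


Fixpoint ball (L : seq V) n : seq V :=
  if n is n'.+1 then ball L n' ++ flatten [seq nbr u | u <- ball L n'] else L.

Lemma ball_sub L n : {subset L <= ball L n}.
Proof. by elim: n => [|n IH] //= x /IH; rewrite mem_cat => ->. Qed.

Lemma ball_nbr L n u x : u \in ball L n -> x \in nbr u -> x \in ball L n.+1.
Proof.
move=> uB xu /=; rewrite mem_cat; apply/orP; right; apply/flattenP.
by exists (nbr u) => //; apply/mapP; exists u.
Qed.

Lemma avoid_out F n x : x \notin ball F n -> av F n x = 1.
Proof.
elim: n x => [|n IH] x xB; first by rewrite avoid0.
have xF : x \notin F by apply: contra xB => /(@ball_sub F n.+1).
rewrite avoidS // /no_return_by -(ptrans_sum x); apply: eq_big_seq => u un.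
rewrite IH ?mulr1 //; apply: contra xB => uB; apply: (@ball_nbr F n u x uB).
by rewrite -nbr_sym.
Qed.

Definition tf (F : seq V) n x := 1 - av F n x.
Definition supp (f : V -> R) (K : seq V) := forall x, f x != 0 -> x \in K.
Definition D (K : seq V) (f g : V -> R) :=
  \sum_(x <- K) f x * \sum_(y <- nbr x) c x y * (g x - g y).

Lemma supp0 f K x : supp f K -> x \notin K -> f x = 0.
Proof. by move=> sf xK; apply/eqP; apply: contraNT xK; apply: sf. Qed.

Lemma supp_tf F n : supp (tf F n) (undup (ball F n)).
Proof.
move=> x; rewrite mem_undup; apply: contraR => /avoid_out H.
by rewrite ?negbK /tf H subrr ?eqxx.
Qed.

Lemma D_indep K K' f g : uniq K -> uniq K' -> supp f K -> supp f K' ->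
  D K f g = D K' f g.
Proof.
move=> uK uK' sK sK'; apply: sum_conv => // y yK.
  by rewrite (supp0 sK yK) mul0r.
by rewrite (supp0 sK' yK) mul0r.
Qed.

Lemma inner_split x g : \sum_(y <- nbr x) c x y * (g x - g y) =
  g x * cv c nbr x - \sum_(y <- nbr x) c x y * g y.
Proof.
by rewrite /cv mulr_sumr -sumrB; apply: eq_bigr => y _; rewrite mulrBr mulrC.
Qed.

Lemma inner_conv K x g : uniq K -> supp g K ->
  \sum_(y <- nbr x) c x y * g y = \sum_(y <- K) c x y * g y.
Proof.
move=> uK sg; apply: sum_conv => //; first exact: nbr_uniq.
  by move=> y /c_out ->; rewrite mul0r.
by move=> y /(supp0 sg) ->; rewrite mulr0.
Qed.

Lemma D_split K f g : uniq K -> supp g K ->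
  D K f g = \sum_(x <- K) f x * g x * cv c nbr x
            - \sum_(x <- K) \sum_(y <- K) c x y * f x * g y.
Proof.
move=> uK sg; rewrite /D -sumrB; apply: eq_bigr => x _.
rewrite inner_split (@inner_conv K x g uK sg) mulrBr mulrA; congr (_ - _).
rewrite mulr_sumr; by apply: eq_bigr => y _; rewrite mulrA (mulrC (f x)).
Qed.

Lemma D_sym K f g : uniq K -> supp f K -> supp g K -> D K f g = D K g f.
Proof.
move=> uK sf sg; rewrite (@D_split K f g uK sg) (@D_split K g f uK sf); congr (_ - _).
  by apply: eq_bigr => x _; rewrite (mulrC (f x)).
rewrite exchange_big; apply: eq_bigr => x _; apply: eq_bigr => y _.
by rewrite c_sym mulrAC.
Qed.

Lemma sumK_le_cv K x : uniq K -> \sum_(y <- K) c x y <= cv c nbr x.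
Proof.
move=> uK.
have -> : \sum_(y <- K) c x y =
          \sum_(y <- nbr x) (if y \in K then c x y else 0).
  rewrite -(@sum_conv K (nbr x) (fun y => if y \in K then c x y else 0)) //.
  - by apply: eq_big_seq => y ->.
  - exact: nbr_uniq.
  - by move=> y /negbTE ->.
  - by move=> y /c_out ->; case: ifP.
rewrite /cv; apply: ler_sum => y _; case: ifP => _ //; exact: c_ge0.
Qed.

Lemma D_ge0 K f : uniq K -> supp f K -> 0 <= D K f f.
Proof.
move=> uK sf; rewrite (@D_split K f f uK sf) subr_ge0.
have H1 x y : c x y * f x * f y <= (c x y * f x ^+ 2 + c x y * f y ^+ 2) / 2.
  have := mulr_ge0 (c_ge0 x y) (sqr_ge0 (f x - f y)); nra.
apply: (le_trans (y := \sum_(x <- K) \sum_(y <- K) c x y * f x ^+ 2)).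
  apply: (le_trans (y := \sum_(x <- K) \sum_(y <- K)
      (c x y * f x ^+ 2 + c x y * f y ^+ 2) / 2)).
    by apply: ler_sum => x _; apply: ler_sum => y _; apply: H1.
  under eq_bigr do under eq_bigr do rewrite mulrDl.
  under eq_bigr do rewrite big_split /=.
  rewrite big_split /= [X in _ + X <= _]exchange_big /=.
  under [X in _ + X <= _]eq_bigr do under eq_bigr do rewrite c_sym.
  rewrite -big_split /=; apply: ler_sum => x _; rewrite -big_split /=.
  by apply: ler_sum => y _; lra.
apply: ler_sum => x _; rewrite -mulr_suml mulrC expr2.
by rewrite ler_wpM2l ?mul_ge0 ?sqr_ge0 ?sumK_le_cv // -expr2 sqr_ge0.
Qed.

Lemma D_linl K f1 f2 a b g :
  D K (fun x => a * f1 x + b * f2 x) g = a * D K f1 g + b * D K f2 g.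
Proof.
rewrite /D [a * _]mulr_sumr [b * _]mulr_sumr -big_split.
by apply: eq_bigr => x _ /=; ring.
Qed.

Lemma D_linr K f g1 g2 a b :
  D K f (fun x => a * g1 x + b * g2 x) = a * D K f g1 + b * D K f g2.
Proof.
rewrite /D [a * _]mulr_sumr [b * _]mulr_sumr -big_split.
apply: eq_bigr => x _ /=.
have -> : \sum_(y <- nbr x) c x y * (a * g1 x + b * g2 x - (a * g1 y + b * g2 y))
   = a * \sum_(y <- nbr x) c x y * (g1 x - g1 y)
     + b * \sum_(y <- nbr x) c x y * (g2 x - g2 y).
  by rewrite !mulr_sumr -big_split; apply: eq_bigr => y _ /=; ring.
ring.
Qed.



Lemma inner_tf F n x : \sum_(y <- nbr x) c x y * (tf F n x - tf F n y) =
  cv c nbr x * (nr F x n - av F n x).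
Proof.
have -> : \sum_(y <- nbr x) c x y * (tf F n x - tf F n y) =
   \sum_(y <- nbr x) cv c nbr x * (ptrans c nbr x y * av F n y)
   - \sum_(y <- nbr x) c x y * av F n x.
  by rewrite -sumrB; apply: eq_bigr => y _; rewrite /tf c_ptrans; ring.
by rewrite -mulr_sumr -mulr_suml -/(cv c nbr x) mulrBr.
Qed.

Lemma D_tf K g F n : D K g (tf F n) =
  \sum_(x <- K) g x * (cv c nbr x * (nr F x n - av F n x)).
Proof. by apply: eq_bigr => x _; rewrite inner_tf. Qed.

Definition S (F : seq V) n := \sum_(x <- F) cv c nbr x * nr F x n.

Lemma E_tf_le F n : uniq F -> D (undup (ball F n)) (tf F n) (tf F n) <= S F n.
Proof.
move=> uF; rewrite D_tf.
have -> : S F n = \sum_(x <- undup (ball F n))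
            (if x \in F then cv c nbr x * nr F x n else 0).
  rewrite /S (eq_big_seq (fun x => if x \in F then cv c nbr x * nr F x n else 0));
    last by move=> x ->.
  apply: sum_conv => //; first by rewrite undup_uniq.
  - by move=> y /negbTE ->.
  - move=> y; rewrite mem_undup => yB.
    have yF : y \notin F by apply: contra yB; apply: ball_sub.
    by rewrite (negbTE yF).
apply: ler_sum => x _; case: ifP => xF.
  by rewrite /tf avoid_in // subr0 mul1r subr0.
rewrite -(@avoidS F n x (negbT xF)).
apply: mulr_ge0_le0; first by rewrite /tf subr_ge0 avoid_le1.
by apply: mulr_ge0_le0; [apply: ltW | rewrite subr_le0 avoid_dec].
Qed.

Definition test (F K : seq V) (g : V -> R) :=
  [/\ uniq K, supp g K & forall x, x \in F -> g x = 1].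

Lemma cvg_list_sum (s : seq V) (u : V -> nat -> R) (l : V -> R) :
  (forall x, x \in s -> u x @ \oo --> l x) ->
  (fun n => \sum_(x <- s) u x n) @ \oo --> \sum_(x <- s) l x.
Proof.
elim: s => [|y s IH] H.
  rewrite big_nil; under eq_cvg do rewrite big_nil; exact: cvg_cst.
rewrite big_cons; under eq_cvg do rewrite big_cons.
apply: cvgD; first by apply: H; exact: mem_head.
by apply: IH => x xs; apply: H; rewrite in_cons xs orbT.
Qed.

Lemma capf_list F : uniq F ->
  capf c nbr [set` F] = \sum_(x <- F) cv c nbr x * escape c nbr [set` F] x.
Proof. by move=> uF; rewrite /capf -fsbig_seq. Qed.

Lemma S_cvg F : uniq F -> S F @ \oo --> capf c nbr [set` F].
Proof.
move=> uF; rewrite capf_list //; apply: cvg_list_sum => x _.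
by apply: cvgMr; apply: nr_cvg.
Qed.

Lemma L_cvg K g F : uniq F -> test F K g ->
  (fun n => D K g (tf F n)) @ \oo --> capf c nbr [set` F].
Proof.
move=> uF [uK sg g1].
under eq_cvg do rewrite D_tf.
have -> : capf c nbr [set` F] = \sum_(x <- K)
    (if x \in F then cv c nbr x * escape c nbr [set` F] x else 0).
  rewrite capf_list // (eq_big_seq (fun x => if x \in F then
     cv c nbr x * escape c nbr [set` F] x else 0)); last by move=> x ->.
  apply: sum_conv => //.
  - by move=> y /negbTE ->.
  - move=> y yK; case: ifP => // yF; exfalso.
    by move: yK; rewrite (sg y) // g1 // oner_neq0.
apply: cvg_list_sum => x _; case: ifP => xF.
  under eq_cvg do rewrite g1 // mul1r avoid_in // subr0.
  by apply: cvgMr; apply: nr_cvg.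
have -> : 0 = g x * (cv c nbr x * 0) by rewrite !mulr0.
apply: cvgMr; apply: cvgMr.
rewrite -cvg_shiftS (@eq_cvg _ _ _ _ (fun n => nr F x n.+1 - nr F x n)); last first.
  move=> n; change (nr F x n.+1 - av F n.+1 x = nr F x n.+1 - nr F x n).
  by rewrite (@avoidS F n x (negbT xF)).
have h1 : [sequence nr F x n.+1]_n @ \oo --> escape c nbr [set` F] x.
  by rewrite cvg_shiftS; apply: nr_cvg.
have := cvgB h1 (@nr_cvg F x); rewrite subrr; exact.
Qed.

Lemma capf_le_test F K g : uniq F -> test F K g -> capf c nbr [set` F] <= D K g g.
Proof.
move=> uF tg; have [uK sg g1] := tg.
have key n : 2 * D K g (tf F n) - S F n <= D K g g.
  pose K' := undup (K ++ ball F n).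
  have uK' : uniq K' by rewrite undup_uniq.
  have sgK' : supp g K' by move=> x /sg xK; rewrite mem_undup mem_cat xK.
  have stK' : supp (tf F n) K'.
    by move=> x /supp_tf; rewrite !mem_undup mem_cat => ->; rewrite orbT.
  have shK' : supp (fun x => 1 * g x + (-1) * tf F n x) K'.
    move=> x; apply: contraR => xK.
    by rewrite (supp0 sgK' xK) (supp0 stK' xK) !mulr0 addr0 eqxx.
  have := D_ge0 uK' shK'.
  rewrite D_linl !D_linr (@D_sym K' (tf F n) g uK' stK' sgK').
  rewrite (@D_indep K' K g g uK' uK sgK' sg) (@D_indep K' K g (tf F n) uK' uK sgK' sg).
  rewrite (@D_indep K' (undup (ball F n)) (tf F n) (tf F n) uK' _ stK' (@supp_tf F n));
    last by rewrite undup_uniq.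
  have := E_tf_le n uF; lra.
have Hc : (fun n => 2 * D K g (tf F n) - S F n) @ \oo -->
   2 * capf c nbr [set` F] - capf c nbr [set` F].
  by apply: cvgB; [apply: cvgMr; apply: L_cvg | apply: S_cvg].
have H := ler_cvg_to Hc (cvg_cst (D K g g)).
have : 2 * capf c nbr [set` F] - capf c nbr [set` F] <= D K g g.
  by apply: H; apply: nearW => n; apply: key.
lra.
Qed.

Lemma exists_test F eta : uniq F -> 0 < eta ->
  exists K g, test F K g /\ D K g g <= capf c nbr [set` F] + eta.
Proof.
move=> uF eta0.
have : \forall n \near \oo, S F n <= capf c nbr [set` F] + eta.
  by apply: (cvgr_le _ (S_cvg uF)); rewrite ltrDl.
move=> [N _ HN].
exists (undup (ball F N)), (tf F N); split.
  split; first by rewrite undup_uniq.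
    exact: supp_tf.
  by move=> x xF; rewrite /tf avoid_in // subr0.
apply: le_trans (E_tf_le N uF) _; exact: (HN N (leqnn N)).
Qed.



Lemma eventually_disjoint (b : nat -> seq V) (L : seq V) :
  (forall i j x, i != j -> x \in b i -> x \notin b j) ->
  exists J, forall j, (J <= j)%N -> forall x, x \in L -> x \notin b j.
Proof.
move=> Hd; elim: L => [|y L [J HJ]]; first by exists 0%N.
case: (pselect (exists i, y \in b i)) => [[i yi]|ny].
  exists (maxn J i.+1) => j; rewrite geq_max => /andP[Jj ij] x.
  rewrite in_cons => /orP[/eqP->|xL]; last exact: HJ.
  by apply: (Hd i j y) => //; rewrite neq_ltn ij.
exists J => j Jj x; rewrite in_cons => /orP[/eqP->|xL]; last exact: HJ.
by apply/negP => yj; apply: ny; exists j.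
Qed.

Definition Fk (b : nat -> seq V) k := undup (flatten [seq b i | i <- iota 0 k.+1]).

Lemma Fk_mem b k x : x \in Fk b k -> exists2 i, (i <= k)%N & x \in b i.
Proof.
rewrite mem_undup => /flattenP [s /mapP [i]]; rewrite mem_iota add0n ltnS => ik -> xi.
by exists i.
Qed.

Lemma Fk_sub b i k : (i <= k)%N -> {subset b i <= Fk b k}.
Proof.
move=> ik x xi; rewrite mem_undup; apply/flattenP; exists (b i) => //.
by apply/mapP; exists i => //; rewrite mem_iota add0n ltnS.
Qed.

Lemma Fk_mono b k l : (k <= l)%N -> {subset Fk b k <= Fk b l}.
Proof.
move=> kl x /Fk_mem [i ik xi]; apply: (Fk_sub (i := i)) => //.
exact: leq_trans ik kl.
Qed.

Lemma main_arg (b : nat -> seq V) (delta M : R) :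
  0 < delta ->
  (forall j, uniq (b j)) ->
  (forall i j x, i != j -> x \in b i -> x \notin b j) ->
  (forall j, delta <= capf c nbr [set` b j]) ->
  (forall k, capf c nbr [set` Fk b k] <= M) -> False.
Proof.
move=> d0 ub Hd Hb HM.
pose s k := capf c nbr [set` Fk b k].
pose eta := delta / 7.
have eta0 : 0 < eta by rewrite divr_gt0.
have [k Hk] : exists k, forall l, (k <= l)%N -> s l <= s k + eta.
  case: (pselect (exists k, forall l, (k <= l)%N -> s l <= s k + eta)) => // H0.
  exfalso.
  have H1 k : exists l, s k + eta < s l.
    have /existsNP [l] : ~ (forall l, (k <= l)%N -> s l <= s k + eta).
      by move=> H; apply: H0; exists k.
    move/not_implyP => [_ /negP]; rewrite -ltNge => H; by exists l.
  have H2 N : exists l, s 0%N + N%:R * eta <= s l.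
    elim: N => [|N [l Hl]]; first by exists 0%N; rewrite mul0r addr0.
    have [l' Hl'] := H1 l; exists l'.
    rewrite -addn1 natrD mulrDl mul1r addrA; lra.
  pose N := Num.bound `|(M - s 0%N) / eta|.
  have HN : `|(M - s 0%N) / eta| < N%:R by apply: archi_boundP.
  have HN' : M - s 0%N < N%:R * eta.
    rewrite -ltr_pdivrMr //; apply: le_lt_trans HN; exact: ler_norm.
  have [l Hl] := H2 N; have := HM l; rewrite -/(s l); lra.
have uFk l : uniq (Fk b l) by rewrite undup_uniq.
have [K1 [g1 [[uK1 sg1 g11] E1]]] := exists_test (uFk k) eta0.
have [J HJ] := eventually_disjoint K1 Hd.
pose j := maxn J k.+1.
have Jj : (J <= j)%N by rewrite leq_maxl.
have kj : (k <= j)%N by apply: leq_trans (leq_maxr J k.+1); apply: leqnSn.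
have [K2 [g2 [[uK2 sg2 g21] E2]]] := exists_test (uFk j) eta0.
pose K := undup (K1 ++ K2).
have uK : uniq K by rewrite undup_uniq.
have sg1K : supp g1 K by move=> x /sg1 xK; rewrite mem_undup mem_cat xK.
have sg2K : supp g2 K by move=> x /sg2 xK; rewrite mem_undup mem_cat xK orbT.
pose h := fun x => 2^-1 * g1 x + 2^-1 * g2 x.
pose d := fun x => (-1) * g1 x + 1 * g2 x.
have th : test (Fk b k) K h.
  split => //.
    move=> x; apply: contraR => xK.
    by rewrite /h (supp0 sg1K xK) (supp0 sg2K xK) !mulr0 addr0 eqxx.
  move=> x xk; rewrite /h g11 // g21; last exact: (Fk_mono kj).
  rewrite !mulr1; lra.
have td : test (b j) K d.
  split => //.
    move=> x; apply: contraR => xK.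
    by rewrite /d (supp0 sg1K xK) (supp0 sg2K xK) !mulr0 addr0 eqxx.
  move=> x xj; rewrite /d g21; last exact: (Fk_sub (leqnn j)).
  have xK1 : x \notin K1 by apply/negP => xK1; have := HJ j Jj x xK1; rewrite xj.
  by rewrite (supp0 sg1 xK1) mulr0 add0r mulr1.
have Hh := capf_le_test (uFk k) th.
have Hdd := capf_le_test (ub j) td.
have Hbj := Hb j.
have Hkj := Hk j kj.
rewrite /h /d in Hh Hdd.
rewrite !D_linl !D_linr in Hh Hdd.
rewrite (@D_sym K g2 g1 uK sg2K sg1K) in Hh Hdd.
rewrite (@D_indep K K1 g1 g1 uK uK1 sg1K sg1) (@D_indep K K2 g2 g2 uK uK2 sg2K sg2) in Hh Hdd.
rewrite -/(s k) -/(s j) in Hh Hdd E1 E2 Hkj.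
rewrite /eta in E1 E2 Hkj.
lra.
Qed.



Lemma capf_mono F G : uniq F -> uniq G -> {subset F <= G} ->
  capf c nbr [set` F] <= capf c nbr [set` G].
Proof.
move=> uF uG FG; apply/ler_addgt0Pr => e e0.
have [K [g [[uK sg g1] E]]] := exists_test uG e0.
apply: le_trans E; apply: capf_le_test uF _.
by split => // x /FG; exact: g1.
Qed.

End Pf.

Unset Implicit Arguments.

Theorem lemma2p13 (R : realType) (V : choiceType)
  (c : V -> V -> R) (nbr : V -> seq V)
  (Hnet : is_network c nbr) (Htr : transient c nbr)
  (A : set V) (eps : R) (Heps : 0 < eps) (As : nat -> set V)
  (Hsub : forall i, As i `<=` A)
  (Hdisj : forall i j, i <> j -> As i `&` As j = set0)
  (Hcap : forall i, (eps%:E <= Cap c nbr (As i))%E) :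
  Cap c nbr A = +oo%E.
Proof.
have capf0 : capf c nbr set0 = 0 by rewrite /capf fsbig_set0.
have ne i : exists x, As i x.
  case: (pselect (exists x, As i x)) => // H; exfalso.
  have E : As i = set0.
    apply/seteqP; split=> [x Hx|x []]; by exfalso; apply: H; exists x.
  have := Hcap i; rewrite E /Cap (asboolT (@finite_set0 V)) capf0 lee_fin.
  by move=> /(lt_le_trans Heps); rewrite ltxx.
have [a0 a0A] := ne 0%N.
have [a1 a1A] := ne 1%N.
have a01 : a0 <> a1.
  move=> E; have H01 : (0%N <> 1%N) by congruence.
  have := Hdisj _ _ H01; move/seteqP => [+ _] => /(_ a0) H.
  by case: H; split => //; rewrite E.
have cvpos x : 0 < cv c nbr x.
  have [y yx] : exists y, y <> x.
    case: (pselect (a0 = x)) => [<-|h]; last by exists a0.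
    by exists a1 => h'; apply: a01.
  have [_ _ _ _ Hcon] := Hnet.
  have [p [Hp Hl]] := Hcon x y.
  case: p Hp Hl => [_ /= E|z p /= /andP [Hz _] _]; first by exfalso; apply: yx.
  have zn : z \in nbr x by apply/(c_nbr Hnet).
  rewrite /cv (big_rem z zn) /=.
  have H1 : 0 <= \sum_(w <- rem z (nbr x)) c x w.
    by apply: sumr_ge0 => w _; exact: (c_ge0 Hnet).
  lra.
have Hex i : exists s : seq V,
    [/\ uniq s, [set` s] `<=` As i & eps / 2 <= capf c nbr [set` s]].
  have key B : finite_set B -> B `<=` As i -> eps / 2 <= capf c nbr B ->
      exists s : seq V, [/\ uniq s, [set` s] `<=` As i & eps / 2 <= capf c nbr [set` s]].
    move=> /finite_seqP [s ->] BA Hc; exists (undup s).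
    have E : [set` undup s] = [set` s].
      by apply/seteqP; split => x /= H; rewrite ?mem_undup in H *.
    by rewrite E; split => //; rewrite undup_uniq.
  case: (pselect (finite_set (As i))) => fin.
    apply: (key _ fin) => //; have := Hcap i; rewrite /Cap (asboolT fin) lee_fin.
    lra.
  have := Hcap i; rewrite /Cap (asboolF fin) => H.
  have : ((eps / 2)%:E < ereal_sup [set (capf c nbr B)%:E | B in
            [set B | B `<=` As i /\ finite_set B]])%E.
    by apply: lt_le_trans H; rewrite lte_fin; lra.
  move=> /ereal_sup_gt [y [B [BA fB] <-]]; rewrite lte_fin => Hc.
  by apply: (key B fB BA); apply: ltW.
have [b Hb] := choice Hex.
have Hd i j x : i != j -> x \in b i -> x \notin b j.
  move=> /eqP ij xi; apply/negP => xj.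
  have [_ Hi _] := Hb i; have [_ Hj _] := Hb j.
  have : (As i `&` As j) x by split; [apply: Hi | apply: Hj].
  by rewrite Hdisj.
have HA k : ((capf c nbr [set` Fk b k])%:E <= Cap c nbr A)%E.
  have sub : [set` Fk b k] `<=` A.
    move=> x /= /Fk_mem [i _ xi]; have [_ Hi _] := Hb i; exact: (Hsub i x (Hi x xi)).
  case: (pselect (finite_set A)) => fin.
    rewrite /Cap (asboolT fin) lee_fin.
    move: fin => /finite_seqP [sA EA].
    have EA' : A = [set` undup sA].
      rewrite EA; apply/seteqP; split => x /= H; by rewrite ?mem_undup in H *.
    move: sub; rewrite EA' => sub.
    apply: (capf_mono Hnet cvpos); rewrite ?undup_uniq //;
      try by move=> x xF; apply: (sub x xF).
  rewrite /Cap (asboolF fin); apply: ereal_sup_ubound.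
  by exists [set` Fk b k].
case E: (Cap c nbr A) => [M| |] //.
  exfalso; apply: (main_arg Hnet cvpos (b := b) (delta := eps / 2) (M := M)).
  - by rewrite divr_gt0.
  - by move=> j; have [] := Hb j.
  - exact: Hd.
  - by move=> j; have [] := Hb j.
  - by move=> k; have := HA k; rewrite E lee_fin.
by have := HA 0%N; rewrite E leeNy_eq.
Qed.
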